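(* Let $G$ be a two-directional orthogonal ray graph with given bipartition $(U,V)$ and without twins. Then $G$ has exactly one normalized representation if and only if $G$ is a chain graph.
   Context: All graphs are finite and simple. $G$ is a bipartite graph with a fixed bipartition $(U,V)$; $N(x)$ denotes the open neighborhood of $x$. Standing assumption: $G$ has no twins, i.e. no two distinct vertices $x\neq y$ with $N(x)=N(y)$. A representation of $G$ is a pair $(<_x,<_y)$ of linear orders on $V(G)$ such that for all $u\in U$ and $v\in V$: $uv\in E(G)$ iff ($u<_x v$ and $u<_y v$). $G$ is a two-directional orthogonal ray graph if it has a representation. A representation $(<_x,<_y)$ is normalized if: (a) for all $u_1,u_2\in U$: ($u_1<_x u_2$ and $u_1<_y u_2$) iff $N(u_1)\supsetneq N(u_2)$; (b) for all $v_1,v_2\in V$: ($v_1<_x v_2$ and $v_1<_y v_2$) iff $N(v_1)\subsetneq N(v_2)$; (c) for all $u\in U$, $v\in V$: ($v<_x u$ and $v<_y u$) iff for every $v'\in N(u)$, $N(v)\subsetneq N(v')$. Two normalized representations are different if they differ as pairs of linear orders. A bipartite graph with bipartition $(U,V)$ is a chain graph if the neighborhoods $\{N(u):u\in U\}$ are linearly ordered by inclusion (equivalently, there is a linear order $<_U$ on $U$ with $u_1<_U u_2 \iff N(u_1)\subseteq N(u_2)$). *)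

(* Defs.v *)
From mathcomp Require Import all_boot.
Set Implicit Arguments. Unset Strict Implicit. Unset Printing Implicit Defensive.

(* A finite simple graph on the vertex type T is given by an edge relation e;
   the fixed bipartition (U,V) is given by the predicate inU (U = inU, V = its
   complement). *)

Definition nbhd (T : finType) (e : rel T) (x : T) : {set T} := [set y | e x y].

Definition bipartite_graph (T : finType) (e : rel T) (inU : pred T) : Prop :=
  symmetric e /\ irreflexive e /\ (forall x y, e x y -> inU x != inU y).

Definition twin_free (T : finType) (e : rel T) : Prop :=
  forall x y, nbhd e x = nbhd e y -> x = y.

Definition strict_linear_order (T : finType) (r : rel T) : Prop :=
  irreflexive r /\ transitive r /\ (forall x y, x != y -> r x y || r y x).

Definition is_representation (T : finType) (e : rel T) (inU : pred T)
    (lx ly : rel T) : Prop :=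
  strict_linear_order lx /\ strict_linear_order ly /\
  (forall u v, inU u -> ~~ inU v -> e u v = lx u v && ly u v).

(* normalized representation, conditions (a), (b), (c) *)
Definition normalized (T : finType) (e : rel T) (inU : pred T)
    (lx ly : rel T) : Prop :=
  is_representation e inU lx ly /\
  (forall u1 u2, inU u1 -> inU u2 ->
     lx u1 u2 && ly u1 u2 = (nbhd e u2 \proper nbhd e u1)) /\
  (forall v1 v2, ~~ inU v1 -> ~~ inU v2 ->
     lx v1 v2 && ly v1 v2 = (nbhd e v1 \proper nbhd e v2)) /\
  (forall u v, inU u -> ~~ inU v ->
     (lx v u && ly v u <->
      (forall v', v' \in nbhd e u -> nbhd e v \proper nbhd e v'))).

Definition two_dorg (T : finType) (e : rel T) (inU : pred T) : Prop :=
  exists lx ly, is_representation e inU lx ly.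

Definition chain_graph (T : finType) (e : rel T) (inU : pred T) : Prop :=
  forall u1 u2, inU u1 -> inU u2 ->
    nbhd e u1 \subset nbhd e u2 \/ nbhd e u2 \subset nbhd e u1.

(* G has exactly one normalized representation (pairs of linear orders are
   compared extensionally) *)
Definition unique_normalized (T : finType) (e : rel T) (inU : pred T) : Prop :=
  exists lx ly, normalized e inU lx ly /\
    (forall lx' ly', normalized e inU lx' ly' -> lx' =2 lx /\ ly' =2 ly).

(* Main.v *)
Require Import Defs.
From mathcomp Require Import all_boot.
Set Implicit Arguments. Unset Strict Implicit.

Lemma nbE (T : finType) (e : rel T) x y : (y \in nbhd e x) = e x y.
Proof. by rewrite inE. Qed.

Lemma slo_asym (T : finType) (r : rel T) x y :
  strict_linear_order r -> r x y -> r y x = false.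
Proof.
move=> [irr [tr _]] rxy; apply/negP => ryx.
by have := tr _ _ _ rxy ryx; rewrite irr.
Qed.

Lemma eq_of_sub (T : finType) (r s : rel T) :
  strict_linear_order r -> strict_linear_order s ->
  (forall x y, r x y -> s x y) -> s =2 r.
Proof.
move=> hr hs sub x y.
case rxy: (r x y); first exact: sub.
case: (eqVneq x y) => [->|nxy]; first by case: hs => irr _; rewrite irr.
have := hr.2.2 _ _ nxy; rewrite rxy /= => ryx.
exact: slo_asym hs (sub _ _ ryx).
Qed.

Definition L (T : finType) (e : rel T) (inU : pred T) : rel T :=
  fun x y => if inU x then (if inU y then nbhd e y \proper nbhd e x else e x y)
             else (if inU y then ~~ e y x else nbhd e x \proper nbhd e y).

Lemma V_nested (T : finType) (e : rel T) (inU : pred T) :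
  bipartite_graph e inU -> chain_graph e inU ->
  forall v1 v2, ~~ inU v1 -> ~~ inU v2 ->
  nbhd e v1 \subset nbhd e v2 \/ nbhd e v2 \subset nbhd e v1.
Proof.
move=> [sym [irr bip]] ch v1 v2 h1 h2.
case s12: (nbhd e v1 \subset nbhd e v2); first by left.
case s21: (nbhd e v2 \subset nbhd e v1); first by right.
move/negbT/subsetPn: s12 => [u1]; rewrite !nbE => e1 n1.
move/negbT/subsetPn: s21 => [u2]; rewrite !nbE => e2 n2.
have U1 : inU u1 by move: (bip _ _ e1); case: (inU u1); rewrite ?(negbTE h1).
have U2 : inU u2 by move: (bip _ _ e2); case: (inU u2); rewrite ?(negbTE h2).
case: (ch _ _ U1 U2) => /subsetP S.
- have := S v1; rewrite !nbE sym e1 => /(_ isT); by rewrite sym (negbTE n2).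
- have := S v2; rewrite !nbE sym e2 => /(_ isT); by rewrite sym (negbTE n1).
Qed.

Lemma L_slo (T : finType) (e : rel T) (inU : pred T) :
  bipartite_graph e inU -> twin_free e -> chain_graph e inU ->
  strict_linear_order (L e inU).
Proof.
move=> B tw ch; have VN := V_nested B ch.
case: B => [sym [irr bip]].
split; first by move=> x; rewrite /L; case: (inU x); rewrite properxx.
split.
- move=> y x z; rewrite /L.
  case Hx: (inU x); case Hy: (inU y); case Hz: (inU z).
  + move=> a b; exact: proper_trans b a.
  + move=> /proper_sub/subsetP S eyz; by have := S z; rewrite !nbE => ->.
  + move=> exy nezy; rewrite properE; case: (ch _ _ Hx Hz) => S.
    * by move/subsetP: S => /(_ y); rewrite !nbE exy (negbTE nezy) => /(_ isT).
    * rewrite S /=; apply/subsetPn; exists y; rewrite nbE //.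
  + move=> exy /proper_sub/subsetP S; have := S x; by rewrite !nbE sym exy sym => ->.
  + move=> neyx /proper_sub/subsetP S; apply: contra neyx => ezx; rewrite -nbE; apply: S; by rewrite nbE.
  + move=> neyx eyz; rewrite properE.
    case: (VN _ _ (negbT Hx) (negbT Hz)) => S.
    * rewrite S /=; apply/subsetPn; exists y; rewrite nbE sym //.
    * move/subsetP: S => /(_ y); rewrite !nbE (sym z y) eyz (sym x y) (negbTE neyx).
      by move=> /(_ isT).
  + move=> /proper_sub/subsetP S nezy; apply: contra nezy => ezx; rewrite sym -nbE; apply: S; by rewrite nbE sym.
  + move=> a b; exact: proper_trans a b.
- move=> x y nxy; rewrite /L.
  case Hx: (inU x); case Hy: (inU y).
  + case: (ch _ _ Hx Hy) => S; rewrite !properE S /= ?andbF ?orbF ?andbT /=.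
    * apply/negP => S'; apply: (negP nxy); apply/eqP; apply: tw; apply/eqP; by rewrite eqEsubset S S'.
    * apply/negP => S'; apply: (negP nxy); apply/eqP; apply: tw; apply/eqP; by rewrite eqEsubset S S'.
  + by rewrite sym orbN.
  + by rewrite sym orNb.
  + case: (VN _ _ (negbT Hx) (negbT Hy)) => S; rewrite !properE S /= ?andbF ?orbF ?andbT /=.
    * apply/negP => S'; apply: (negP nxy); apply/eqP; apply: tw; apply/eqP; by rewrite eqEsubset S S'.
    * apply/negP => S'; apply: (negP nxy); apply/eqP; apply: tw; apply/eqP; by rewrite eqEsubset S S'.
Qed.

Lemma norm_swap (T : finType) (e : rel T) (inU : pred T) lx ly :
  normalized e inU lx ly -> normalized e inU ly lx.
Proof.
case=> [[a [b c]] [d [f g]]]; split; [split; [|split] | split; [|split]] => //.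
- by move=> u v hu hv; rewrite andbC c.
- by move=> u v hu hv; rewrite andbC d.
- by move=> u v hu hv; rewrite andbC f.
- by move=> u v hu hv; rewrite andbC; exact: g.
Qed.

Lemma nonadj (T : finType) (e : rel T) (inU : pred T) :
  bipartite_graph e inU -> chain_graph e inU ->
  forall u v, inU u -> ~~ inU v -> ~~ e u v ->
  forall v', v' \in nbhd e u -> nbhd e v \proper nbhd e v'.
Proof.
move=> B ch u v hu hv nuv v'; have VN := V_nested B ch.
case: B => [sym [irr bip]]; rewrite nbE => euv'.
have hv' : ~~ inU v'.
  by move: (bip _ _ euv'); rewrite hu; case: (inU v').
rewrite properE; case: (VN _ _ hv hv') => S.
- rewrite S /=; apply/subsetPn; exists u; rewrite nbE sym //.
- move/subsetP: S => /(_ u); rewrite !nbE (sym v' u) euv' (sym v u) (negbTE nuv).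
  by move=> /(_ isT).
Qed.

Lemma L_norm (T : finType) (e : rel T) (inU : pred T) :
  bipartite_graph e inU -> twin_free e -> chain_graph e inU ->
  normalized e inU (L e inU) (L e inU).
Proof.
move=> B tw ch; have S := L_slo B tw ch; have NA := nonadj B ch.
split.
  split => //; split => //.
  by move=> u v hu hv; rewrite /L hu (negbTE hv) andbb.
split; first by move=> u1 u2 h1 h2; rewrite /L h1 h2 andbb.
split; first by move=> v1 v2 h1 h2; rewrite /L (negbTE h1) (negbTE h2) andbb.
move=> u v hu hv; rewrite andbb /L (negbTE hv) hu; split.
- by move=> nuv; apply: NA.
- move=> H; apply/negP => euv; have := H v; rewrite nbE euv properxx.
  by move=> /(_ isT).
Qed.

Lemma L_min (T : finType) (e : rel T) (inU : pred T) lx ly :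
  bipartite_graph e inU -> chain_graph e inU ->
  normalized e inU lx ly -> forall x y, L e inU x y -> lx x y && ly x y.
Proof.
move=> B ch [[_ [_ rep]] [Ha [Hb Hc]]] x y; rewrite /L.
case Hx: (inU x); case Hy: (inU y).
- by rewrite Ha.
- by rewrite -rep // Hy.
- move=> nyx; apply/(Hc y x Hy (negbT Hx)); exact: nonadj B ch _ _ Hy (negbT Hx) nyx.
- by rewrite Hb ?Hx ?Hy.
Qed.

Theorem theorem1 (T : finType) (e : rel T) (inU : pred T) :
  bipartite_graph e inU -> twin_free e -> two_dorg e inU ->
  (unique_normalized e inU <-> chain_graph e inU).
Proof.
move=> B tw _; split.
- case=> lx [ly [N uniq]].
  have [h _] := uniq _ _ (norm_swap N).
  move=> u1 u2 U1 U2; case: (eqVneq u1 u2) => [->|n]; first by left.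
  case: N => [[slx [sly rep]] [Ha _]].
  have := slx.2.2 _ _ n; case/orP => H.
  + right; have := Ha _ _ U1 U2; rewrite h H /=; by move=> /esym/proper_sub.
  + left; have := Ha _ _ U2 U1; rewrite h H /=; by move=> /esym/proper_sub.
- move=> ch; exists (L e inU), (L e inU); split; first exact: L_norm.
  move=> lx ly N; have S := L_slo B tw ch; have M := L_min B ch N.
  case: (N) => [[slx [sly _]] _]; split; apply: eq_of_sub => // x y /M /andP [].
  + by [].
  + by [].
Qed.
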